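(* Let $\ell\ge2$, $r_0,\dots,r_\ell\ge1$ integers, $d_0,\dots,d_\ell$ integers with $d_V=\sum_kd_k=0$, and $\mathbf{g}\ge1$ an integer. Then, as $c\to+\infty$, the quantity $\mathring{\mathfrak{F}}(c)$ defined in the context has an asymptotic expansion $$\mathring{\mathfrak{F}}(c)=(\mu_0-\mu_1)\Big(Fut_1\,c+Fut_2+\frac{Fut_3}{c}+\frac{Fut_4}{c^2}+\cdots\Big),$$ where the real coefficients $Fut_i$ depend only on the $r_k$, $d_k$ and $\mathbf{g}$, and $$Fut_1=\frac{2\pi_R^2r_Vr_0r_1}{(r_V-1)!(r_V+1)!(r_0+r_1)}>0,\qquad Fut_2=\frac{2r_0r_1\pi_R^2}{(r_V-1)!(r_V+2)!(r_0+r_1)}\big[(r_V+2)(\mathbf{g}-1)+2r_V\mu_{01}\big],$$ with $\mu_{01}=\frac{d_0+d_1}{r_0+r_1}$.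
   Context: $\mu_k=d_k/r_k$, $r_V=\sum_kr_k$, $\pi_R=\prod_k(r_k-1)!$, $c$ real with $c>\max_k\mu_k$. For $1\le j\ne k\le\ell$: $\alpha_0=\frac{\pi_R}{r_V!}(cr_V-d_V)$, $\alpha_j=\frac{\pi_R}{(r_V+1)!}r_j(c(r_V+1)-d_V-\mu_j)$, $\alpha_{jk}=\frac{\pi_R}{(r_V+2)!}r_jr_k(c(r_V+2)-d_V-\mu_j-\mu_k)$, $\alpha_{jj}=\frac{\pi_R}{(r_V+2)!}r_j(r_j+1)(c(r_V+2)-d_V-2\mu_j)$, $\beta_0=\frac{\pi_R}{(r_V-1)!}((r_V-1)r_Vc+2(1-\mathbf{g})-(r_V-1)d_V)$, $\beta_j=\frac{\pi_Rr_j}{r_V!}(r_V(r_V-1)c+2(1-\mathbf{g})-d_V(r_V-2)-r_V\mu_j)$. $A$ is the $(\ell-1)\times(\ell-1)$ matrix $A_{ij}=\alpha_{ij}-\alpha_i\alpha_j/\alpha_0$, $2\le i,j\le\ell$ (invertible for $c>\max\mu_k$), and $\mathring{\mathfrak{F}}(c)=(\alpha_0\beta_1-\alpha_1\beta_0)-\sum_{j,r=2}^\ell(A^{-1})_{rj}(\alpha_0\beta_r-\alpha_r\beta_0)\big(\alpha_{j1}-\frac{\alpha_1\alpha_j}{\alpha_0}\big)$. *)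

(* Defs.v *)
From HB Require Import structures.
From mathcomp Require Import all_boot all_order all_algebra.
From mathcomp Require Import reals.
Set Implicit Arguments. Unset Strict Implicit. Unset Printing Implicit Defensive.
Import Order.TTheory GRing.Theory Num.Theory.
Local Open Scope ring_scope.

(* Vertices are 0..l; the data r d are given as sequences nat -> _, of which
   only the values at 0..l are used. *)
Section Defs.
Variable R : realType.
Variables (l : nat) (r : nat -> nat) (d : nat -> int) (g : nat).

Definition mu (k : nat) : R := (d k)%:~R / (r k)%:R.
Definition rV : nat := (\sum_(k < l.+1) r k)%N.
Definition dV : R := \sum_(k < l.+1) (d k)%:~R.
Definition piR : R := (\prod_(k < l.+1) ((r k).-1)`!)%N%:R.

Definition alpha0 (c : R) : R :=
  piR / (rV`!)%:R * (c * rV%:R - dV).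
Definition alpha1 (j : nat) (c : R) : R :=
  piR / (rV.+1`!)%:R * (r j)%:R * (c * (rV.+1)%:R - dV - mu j).
Definition alpha2 (j k : nat) (c : R) : R :=
  if j == k then
    piR / (rV.+2`!)%:R * (r j)%:R * ((r j).+1)%:R
      * (c * (rV.+2)%:R - dV - 2 * mu j)
  else
    piR / (rV.+2`!)%:R * (r j)%:R * (r k)%:R
      * (c * (rV.+2)%:R - dV - mu j - mu k).
Definition beta0 (c : R) : R :=
  piR / ((rV.-1)`!)%:R
    * ((rV.-1)%:R * rV%:R * c + 2 * (1 - g%:R) - (rV.-1)%:R * dV).
Definition beta1 (j : nat) (c : R) : R :=
  piR * (r j)%:R / (rV`!)%:R
    * (rV%:R * (rV.-1)%:R * c + 2 * (1 - g%:R) - dV * (rV%:R - 2)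
       - rV%:R * mu j).

(* The (l-1)x(l-1) matrix A, row/column index i : 'I_(l.-1) stands for
   vertex i+2 (so indices run over 2..l). *)
Definition Amat (c : R) : 'M[R]_(l.-1) :=
  \matrix_(i, j) (alpha2 (i.+2) (j.+2) c
                  - alpha1 (i.+2) c * alpha1 (j.+2) c / alpha0 c).

Definition Fring (c : R) : R :=
  (alpha0 c * beta1 1 c - alpha1 1 c * beta0 c)
  - \sum_(j < l.-1) \sum_(s < l.-1)
      (invmx (Amat c)) s j
      * (alpha0 c * beta1 (s.+2) c - alpha1 (s.+2) c * beta0 c)
      * (alpha2 (j.+2) 1 c - alpha1 1 c * alpha1 (j.+2) c / alpha0 c).

Definition Fut1 : R :=
  2 * piR ^+ 2 * rV%:R * (r 0)%:R * (r 1)%:R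
  / (((rV.-1)`!)%:R * (rV.+1`!)%:R * (r 0 + r 1)%:R).

Definition mu01 : R := (d 0 + d 1)%:~R / (r 0 + r 1)%:R.

Definition Fut2 : R :=
  2 * (r 0)%:R * (r 1)%:R * piR ^+ 2
  / (((rV.-1)`!)%:R * (rV.+2`!)%:R * (r 0 + r 1)%:R)
  * ((rV.+2)%:R * (g%:R - 1) + 2 * rV%:R * mu01).
End Defs.

(* Main.v *)
Require Import Defs.
From HB Require Import structures.
From mathcomp Require Import all_boot all_order all_algebra.
From mathcomp Require Import reals.
From mathcomp Require Import ring lra zify.
Import Order.TTheory GRing.Theory Num.Theory.
Local Open Scope ring_scope.
Set Implicit Arguments. Unset Strict Implicit. Unset Printing Implicit Defensive.
Section ExpTh.
Variable R : realFieldType.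
Implicit Types (f g : R -> R) (a b : nat -> R).

Definition psum a (N : nat) (t : R) := (\poly_(i < N) a i).[t].

Definition expN f a N := exists2 del : R, 0 < del &
  exists K : R, forall t, 0 < t -> t < del -> `|f t - psum a N t| <= K * t ^+ N.

Definition Exp f a := forall N, expN f a N.

Lemma polybound (q : {poly R}) : exists B : R, forall t, 0 <= t -> t <= 1 -> `|q.[t]| <= B.
Proof.
exists (\sum_(i < size q) `|q`_i|) => t t0 t1.
rewrite horner_coef; apply: le_trans (ler_norm_sum _ _ _) _.
apply: ler_sum => i _; rewrite normrM ler_piMr //.
by rewrite normrX exprn_ile1 // ger0_norm.
Qed.

Lemma expN_ext f g a b N :
  (forall i, (i < N)%N -> a i = b i) ->
  (exists2 d0 : R, 0 < d0 & forall t, 0 < t -> t < d0 -> f t = g t) ->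
  expN f a N -> expN g b N.
Proof.
move=> eab [d0 d00 efg] [del del0 [K HK]].
exists (Num.min del d0); first by rewrite lt_min del0.
exists K => t t0; rewrite lt_min => /andP[t1 t2].
rewrite -efg // /psum.
have -> : \poly_(i < N) b i = \poly_(i < N) a i.
  apply/polyP => i. rewrite !coefE. by case: ifP => // /eab ->.
exact: HK.
Qed.

Lemma Exp_ext f g a b :
  (forall i, a i = b i) -> (forall t, f t = g t) -> Exp f a -> Exp g b.
Proof.
move=> eab efg E N; apply: expN_ext (E N) => //.
by exists 1 => // t _ _.
Qed.

Arguments Exp_ext [f g a b].
Lemma Exp_poly (p : {poly R}) : Exp (fun t => p.[t]) (fun i => p`_i).
Proof.
move=> N; have [B HB] := polybound (drop_poly N p).
exists 1 => //; exists B => t t0 t1.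
have -> : psum (fun i => p`_i) N t = (take_poly N p).[t].
  by rewrite /psum; congr horner.
rewrite -{1}(poly_take_drop N p) hornerD addrC addKr hornerM hornerXn.
rewrite normrM normrX (ger0_norm (ltW t0)) ler_wpM2r ?exprn_ge0 ?(ltW t0) //.
by apply: HB; rewrite ltW.
Qed.


Lemma psumD a b N t : psum (fun i => a i + b i) N t = psum a N t + psum b N t.
Proof. by rewrite /psum -hornerD; congr horner; apply/polyP => i; rewrite !coefE; case: ifP; rewrite ?addr0. Qed.

Lemma expN_add f g a b N : expN f a N -> expN g b N ->
  expN (fun t => f t + g t) (fun i => a i + b i) N.
Proof.
move=> [d1 d10 [K1 H1]] [d2 d20 [K2 H2]].
exists (Num.min d1 d2); first by rewrite lt_min d10.
exists (K1 + K2) => t t0; rewrite lt_min => /andP[t1 t2].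
rewrite psumD mulrDl.
have -> : f t + g t - (psum a N t + psum b N t) = (f t - psum a N t) + (g t - psum b N t) by ring.
by apply: le_trans (ler_normD _ _) _; apply: lerD; [apply: H1|apply: H2].
Qed.

Lemma Exp_add f g a b : Exp f a -> Exp g b ->
  Exp (fun t => f t + g t) (fun i => a i + b i).
Proof. by move=> E1 E2 N; apply: expN_add. Qed.

Definition conv a b (n : nat) := \sum_(i < n.+1) a i * b (n - i)%N.

Lemma expN_bounded f a N : expN f a N -> exists2 d : R, 0 < d & exists B : R, forall t, 0 < t -> t < d -> `|f t| <= B.
Proof.
move=> [d1 d10 [K1 H1]]; have [B HB] := polybound (\poly_(i < N) a i).
exists (Num.min d1 1); first by rewrite lt_min d10 ltr01.
exists (B + `|K1|) => t t0; rewrite lt_min => /andP[t1 t2].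
have -> : f t = (f t - psum a N t) + psum a N t by ring.
apply: le_trans (ler_normD _ _) _; rewrite addrC; apply: lerD.
  by apply: HB; rewrite ltW.
apply: le_trans (H1 _ t0 t1) _.
apply: le_trans (ler_norm _) _.
by rewrite normrM normrX (ger0_norm (ltW t0)) ler_piMr ?normr_ge0 // exprn_ile1 // ltW.
Qed.

Lemma expN_mul f g a b N : expN f a N -> expN g b N ->
  expN (fun t => f t * g t) (conv a b) N.
Proof.
move=> E1 E2; have [d3 d30 [Bg HBg]] := @expN_bounded g b N E2.
move: E1 E2 => [d1 d10 [K1 H1]] [d2 d20 [K2 H2]].
set pa := \poly_(i < N) a i; set pb := \poly_(i < N) b i.
have [Ba HBa] := polybound pa.
have [Bq HBq] := polybound (drop_poly N (pa * pb)).
have tk : take_poly N (pa * pb) = \poly_(i < N) conv a b i.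
  apply/polyP => n; rewrite coef_take_poly coef_poly; case: ifP => // nN.
  rewrite coefM /conv; apply: eq_bigr => [[i /= ii]] _.
  rewrite !coef_poly; have -> : (i < N)%N by apply: leq_ltn_trans nN; rewrite -ltnS.
  by have -> : (n - i < N)%N by apply: leq_ltn_trans nN; apply: leq_subr.
exists (Num.min (Num.min d1 d2) (Num.min d3 1)); first by rewrite !lt_min d10 d20 d30 ltr01.
exists (K1 * `|Bg| + `|Ba| * K2 + `|Bq|) => t t0; rewrite !lt_min => /andP[/andP[t1 t2] /andP[t3 t4]].
have ht : psum (conv a b) N t = pa.[t] * pb.[t] - t ^+ N * (drop_poly N (pa * pb)).[t].
  rewrite /psum -tk -hornerM -{2}(poly_take_drop N (pa * pb)) hornerD hornerM hornerXn; ring.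
rewrite ht.
have -> : f t * g t - (pa.[t] * pb.[t] - t ^+ N * (drop_poly N (pa * pb)).[t]) =
  (f t - pa.[t]) * g t + pa.[t] * (g t - pb.[t]) + t ^+ N * (drop_poly N (pa * pb)).[t] by ring.
have tN : 0 <= t ^+ N by rewrite exprn_ge0 // ltW.
have -> : (K1 * `|Bg| + `|Ba| * K2 + `|Bq|) * t ^+ N =
  K1 * `|Bg| * t ^+ N + `|Ba| * K2 * t ^+ N + `|Bq| * t ^+ N by ring.
apply: le_trans (ler_normD _ _) _; apply: lerD; last first.
  rewrite normrM (ger0_norm tN) mulrC ler_wpM2r //.
  by apply: le_trans (HBq t _ _) (ler_norm _); rewrite ltW.
apply: le_trans (ler_normD _ _) _; apply: lerD.
  rewrite normrM -mulrA [`|Bg| * _]mulrC mulrA; apply: ler_pM => //.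
    by apply: H1.
  have h := HBg t t0 t3; exact: (le_trans h (ler_norm _)).
rewrite normrM -mulrA; apply: ler_pM => //.
  exact: le_trans (HBa t (ltW t0) (ltW t4)) (ler_norm _).
by apply: H2.
Qed.

Arguments expN_mul [f g a b N].
Lemma Exp_mul f g a b : Exp f a -> Exp g b ->
  Exp (fun t => f t * g t) (conv a b).
Proof. by move=> E1 E2 N; apply: expN_mul. Qed.

Arguments Exp_mul [f g a b].
Arguments Exp_add [f g a b].
Lemma conv0 a b : conv a b 0 = a 0%N * b 0%N.
Proof. by rewrite /conv big_ord_recl big_ord0 addr0. Qed.

Lemma conv1 a b : conv a b 1 = a 0%N * b 1%N + a 1%N * b 0%N.
Proof. by rewrite /conv !big_ord_recl big_ord0 addr0. Qed.


Definition cst (c : R) := fun i : nat => if i == 0%N then c else 0.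

Lemma Exp_lin (al be : R) :
  Exp (fun t => al + be * t) (fun i => if i == 0%N then al else if i == 1%N then be else 0).
Proof.
apply: (Exp_ext _ _ (Exp_poly (al%:P + be *: 'X))).
  by move=> [|[|i]]; rewrite !coefE /= ?mulr0 ?mulr1 ?addr0 ?add0r.
by move=> t; rewrite hornerD hornerZ hornerC hornerX.
Qed.

Lemma Exp_const (c : R) : Exp (fun _ => c) (cst c).
Proof.
apply: (Exp_ext _ _ (Exp_lin c 0)).
  by move=> [|[|i]].
by move=> t; rewrite mul0r addr0.
Qed.

Lemma Exp_sum n (F : 'I_n -> R -> R) (A : 'I_n -> nat -> R) :
  (forall j, Exp (F j) (A j)) ->
  Exp (fun t => \sum_(j < n) F j t) (fun i => \sum_(j < n) A j i).
Proof.
elim: n F A => [|n IH] F A H.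
  apply: (Exp_ext _ _ (Exp_const 0)).
    by move=> [|i]; rewrite big_ord0.
  by move=> t; rewrite big_ord0.
have := Exp_add (IH (fun j => F (widen_ord (leqnSn n) j)) (fun j => A (widen_ord (leqnSn n) j)) (fun j => H _)) (H ord_max).
apply: Exp_ext => [i|t]; by rewrite big_ord_recr.
Qed.

Arguments Exp_sum [n F A].
Lemma Exp_scale k f a : Exp f a -> Exp (fun t => k * f t) (fun i => k * a i).
Proof.
move=> E; apply: (Exp_ext _ _ (Exp_mul (Exp_const k) E)) => // i.
rewrite /conv big_ord_recl /cst /= subn0 big1 ?addr0 // => j _.
by rewrite mul0r.
Qed.

Arguments Exp_scale k [f a].
Lemma Exp_nz f a : Exp f a -> a 0%N != 0 ->
  exists2 del : R, 0 < del & forall t, 0 < t -> t < del -> `|a 0%N| / 2 <= `|f t|.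
Proof.
move=> E a0; have [d1 d10 [K HK]] := E 1%N.
exists (Num.min d1 (`|a 0%N| / 2 / (`|K| + 1))).
  by rewrite lt_min d10 /= !divr_gt0 ?normr_gt0 // ltr_pwDr ?normr_ge0.
move=> t t0; rewrite lt_min => /andP[t1 t2].
have := HK t t0 t1; rewrite /psum horner_poly big_ord_recl big_ord0 /= expr0 mulr1 addr0 expr1.
move=> h.
have Kp : 0 < `|K| + 1 by rewrite ltr_pwDr ?normr_ge0.
rewrite ltr_pdivlMr // in t2.
have KK := ler_norm K.
have h2 : K * t <= `|a 0%N| / 2 by nra.
have h3 := le_trans h h2.
have : `|a 0%N| <= `|f t| + `|f t - a 0%N|.
  have {1}-> : a 0%N = f t - (f t - a 0%N) by ring.
  exact: ler_normB.
lra.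
Qed.


Definition useq a := fun i : nat => if i == 0%N then 0 else - a i / a 0%N.
Fixpoint upow a k := match k with 0%N => cst 1 | k'.+1 => conv (useq a) (upow a k') end.
Definition ainv a (n : nat) := (a 0%N)^-1 * \sum_(0 <= k < n.+1) upow a k n.

Lemma upow_low a k n : (n < k)%N -> upow a k n = 0.
Proof.
elim: k n => [//|k IH] n nk /=.
rewrite /conv big_ord_recl /useq /= mul0r add0r big1 // => i _.
rewrite IH ?mulr0 //.
by rewrite /bump /=; have := ltn_ord i; lia.
Qed.

Lemma Exp_inv f a : Exp f a -> a 0%N != 0 -> Exp (fun t => (f t)^-1) (ainv a).
Proof.
move=> E a0 N.
set u := fun t => 1 - f t / a 0%N.
have Eu : Exp u (useq a).
  apply: (Exp_ext _ _ (Exp_add (Exp_const 1) (Exp_scale (- (a 0%N)^-1) E))).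
    by move=> [|i]; rewrite /cst /useq /=; field.
  by move=> t; rewrite /u mulNr mulrC.
have Ep : forall k, Exp (fun t => u t ^+ k) (upow a k).
  elim=> [|k IH] /=.
    by apply: (Exp_ext _ _ (Exp_const 1)) => // t; rewrite expr0.
  by apply: (Exp_ext _ _ (Exp_mul Eu IH)) => // t; rewrite exprS.
have EG := Exp_scale (a 0%N)^-1 (Exp_sum (fun k : 'I_N => Ep k)).
have [d1 d10 [K1 H1]] : expN (fun t => (a 0%N)^-1 * \sum_(k < N) u t ^+ k) (ainv a) N.
  apply: expN_ext (EG N); last by exists 1.
  move=> i iN; rewrite /ainv; congr (_ * _).
  rewrite -(big_mkord xpredT (fun k => upow a k i)) (big_cat_nat (leq0n i.+1) iN) /=.
  by rewrite [X in _ + X]big1_seq ?addr0 // => k /andP[_]; rewrite mem_index_iota => /andP[ik _]; rewrite upow_low.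
have [d2 d20 [C HC]] := Eu 1%N.
exists (Num.min (Num.min d1 d2) (2^-1 / (`|C| + 1))).
  rewrite !lt_min d10 d20 /=; have := normr_ge0 C; move=> ?; apply: divr_gt0; lra.
exists (`|(a 0%N)^-1| * 2 * `|C| ^+ N + K1) => t t0; rewrite !lt_min => /andP[/andP[t1 t2] t3].
have Cp : 0 < `|C| + 1 by rewrite ltr_pwDr ?normr_ge0.
rewrite ltr_pdivlMr // in t3.
have hu : `|u t| <= `|C| * t.
  have := HC t t0 t2; rewrite /psum horner_poly big_ord_recl big_ord0 /useq /= mul0r !addr0 subr0 expr1 => h.
  by apply: le_trans h _; rewrite ler_wpM2r ?ler_norm // ltW.
have hu2 : `|u t| <= 2^-1.
  apply: le_trans hu _; have := normr_ge0 C; nra.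
have hu3 : 2^-1 <= `|1 - u t|.
  have : 1 <= `|1 - u t| + `|u t|.
    by have := ler_normD (1 - u t) (u t); rewrite subrK normr1.
  lra.
have u1 : 1 - u t != 0 by rewrite -normr_gt0; apply: lt_le_trans hu3; rewrite invr_gt0.
have fe : f t = a 0%N * (1 - u t) by rewrite /u; field.
have geo : (1 - u t)^-1 = \sum_(k < N) u t ^+ k + u t ^+ N / (1 - u t).
  have := subrX1 (u t) N; move=> h.
  have -> : \sum_(k < N) u t ^+ k = (u t ^+ N - 1) / (u t - 1).
    rewrite h mulrC mulKf //; by rewrite -opprB oppr_eq0.
  by field; rewrite u1 /= -opprB oppr_eq0.
have -> : (f t)^-1 - psum (ainv a) N t = (a 0%N)^-1 * (u t ^+ N / (1 - u t)) +
   ((a 0%N)^-1 * \sum_(k < N) u t ^+ k - psum (ainv a) N t).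
  by rewrite fe invfM {1}geo; ring.
rewrite mulrDl; apply: le_trans (ler_normD _ _) _; apply: lerD; last exact: H1.
rewrite normrM -!mulrA ler_wpM2l ?normr_ge0 // normrM normfV.
have tN : 0 <= t ^+ N by rewrite exprn_ge0 // ltW.
have : `|u t| ^+ N <= (`|C| * t) ^+ N by rewrite lerXn2r // ?nnegrE ?normr_ge0 // mulr_ge0 ?normr_ge0 // ltW.
rewrite exprMn normrX => hN.
have i2 : `|1 - u t|^-1 <= 2.
  have p : 0 < `|1 - u t| by apply: lt_le_trans hu3; rewrite invr_gt0 ltr0n.
  rewrite -[_^-1]mul1r ler_pdivrMr //; lra.
have := exprn_ge0 N (normr_ge0 (u t)). have := exprn_ge0 N (normr_ge0 C). have := invr_ge0 `|1 - u t|. rewrite normr_ge0 => /= ? ? ?.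
nra.
Qed.

Lemma ainv0 a : ainv a 0 = (a 0%N)^-1.
Proof. by rewrite /ainv big_nat1 /= /cst /= mulr1. Qed.

Lemma ainv1 a : a 0%N != 0 -> ainv a 1 = - a 1%N / (a 0%N) ^+ 2.
Proof.
move=> a0; rewrite /ainv big_nat_recr //= big_nat1 /= /cst /= add0r conv1 /useq /=.
by rewrite /cst /=; field.
Qed.


Definition Exp2 f (x0 x1 : R) := exists a, [/\ Exp f a, a 0%N = x0 & a 1%N = x1].

Lemma Exp2_lin (al be : R) : Exp2 (fun t => al + be * t) al be.
Proof. by eexists; split; first exact: Exp_lin. Qed.

Lemma Exp2_const (c : R) : Exp2 (fun _ => c) c 0.
Proof. by eexists; split; first exact: Exp_const. Qed.

Lemma Exp2_ext f g x0 x1 : (forall t, f t = g t) -> Exp2 f x0 x1 -> Exp2 g x0 x1.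
Proof. by move=> e [a [E a0 a1]]; exists a; split => //; apply: Exp_ext E. Qed.

Arguments Exp2_ext [f g x0 x1].
Lemma Exp2_add f g x0 x1 y0 y1 : Exp2 f x0 x1 -> Exp2 g y0 y1 ->
  Exp2 (fun t => f t + g t) (x0 + y0) (x1 + y1).
Proof.
move=> [a [E a0 a1]] [b [F b0 b1]]; exists (fun i => a i + b i); split => //=; last by rewrite a1 b1.
  exact: Exp_add. by rewrite a0 b0.
Qed.

Arguments Exp2_add [f g x0 x1 y0 y1].
Lemma Exp2_mul f g x0 x1 y0 y1 : Exp2 f x0 x1 -> Exp2 g y0 y1 ->
  Exp2 (fun t => f t * g t) (x0 * y0) (x0 * y1 + x1 * y0).
Proof.
move=> [a [E a0 a1]] [b [F b0 b1]]; exists (conv a b); split.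
- exact: Exp_mul.
- by rewrite conv0 a0 b0.
- by rewrite conv1 a0 a1 b0 b1.
Qed.

Arguments Exp2_mul [f g x0 x1 y0 y1].
Lemma Exp2_inv f x0 x1 : Exp2 f x0 x1 -> x0 != 0 ->
  Exp2 (fun t => (f t)^-1) x0^-1 (- x1 / x0 ^+ 2).
Proof.
move=> [a [E a0 a1]] x00; exists (ainv a); split.
- by apply: Exp_inv => //; rewrite a0.
- by rewrite ainv0 a0.
- by rewrite ainv1 ?a0 ?a1.
Qed.

Arguments Exp2_inv [f x0 x1].
Lemma Exp2_sum n (F : 'I_n -> R -> R) (X0 X1 : 'I_n -> R) :
  (forall j, Exp2 (F j) (X0 j) (X1 j)) ->
  Exp2 (fun t => \sum_(j < n) F j t) (\sum_(j < n) X0 j) (\sum_(j < n) X1 j).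
Proof.
elim: n F X0 X1 => [|n IH] F X0 X1 H.
  rewrite !big_ord0; apply: Exp2_ext (Exp2_const 0) => t; by rewrite big_ord0.
rewrite !big_ord_recr /=.
apply: Exp2_ext (Exp2_add (IH _ _ _ (fun j => H (widen_ord (leqnSn n) j))) (H ord_max)).
by move=> t; rewrite big_ord_recr.
Qed.

Arguments Exp2_sum [n F X0 X1].
Lemma Exp2_nz f x0 x1 : Exp2 f x0 x1 -> x0 != 0 ->
  exists2 del : R, 0 < del & forall t, 0 < t -> t < del -> f t != 0.
Proof.
move=> [a [E a0 a1]] x00; have a0' : a 0%N != 0 by rewrite a0.
have [del d0 H] := @Exp_nz f a E a0'.
exists del => // t t0 t1; rewrite -normr_gt0; apply: lt_le_trans (H t t0 t1).
by rewrite a0 divr_gt0 ?normr_gt0.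
Qed.

Arguments Exp2_nz [f x0 x1].
End ExpTh.

Lemma exprz1B (R : realFieldType) (c : R) (i : nat) : c != 0 -> c ^ (1 - i%:Z) = c * c^-1 ^+ i.
Proof. by move=> cn; rewrite expfzDr // expr1z exprVn -exprnN. Qed.

Lemma Exp2_congr (R : realFieldType) (f : R -> R) x0 x1 y0 y1 :
  x0 = y0 -> x1 = y1 -> Exp2 f x0 x1 -> Exp2 f y0 y1.
Proof. by move=> -> ->. Qed.

Section Spec.
Variables (R : realType) (l : nat) (r : nat -> nat) (d : nat -> int) (g : nat).
Hypothesis hl : (2 <= l)%N.
Hypothesis hr : forall k, (k <= l)%N -> (0 < r k)%N.
Hypothesis hd : (\sum_(k < l.+1) d k = 0)%R.

Definition rr j : R := (r j)%:R.
Definition dd j : R := (d j)%:~R.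
Definition RV : R := (rV l r)%:R.

Lemma split_sum (F : nat -> R) :
  \sum_(k < l.+1) F k = F 0%N + F 1%N + \sum_(i < l.-1) F i.+2.
Proof.
case: l hl => [|[|n]] //= _.
by rewrite big_ord_recl big_ord_recl /= addrA.
Qed.

Lemma rr_gt0 j : (j <= l)%N -> 0 < rr j.
Proof. by move=> jl; rewrite /rr ltr0n hr. Qed.

Lemma RV_split : RV = rr 0 + rr 1 + \sum_(i < l.-1) rr i.+2.
Proof. by rewrite /RV /rV natr_sum (split_sum (fun k => (r k)%:R)). Qed.

Lemma dd_split : \sum_(i < l.-1) dd i.+2 = - (dd 0 + dd 1).
Proof.
have : \sum_(k < l.+1) dd k = 0 by rewrite /dd -rmorph_sum /= hd.
rewrite split_sum => h; lra.
Qed.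


Definition Et j (t : R) := (RV + 2) * rr j - 2 * dd j * t.
Definition St (W : nat -> R) (t : R) := t * \sum_(i < l.-1) W i.+2 * (Et i.+2 t)^-1.
Definition kk : R := (RV + 2) / (RV + 1).
Definition detMt (t : R) :=
  (rr 0 + rr 1) * (RV + 2 * St (fun j => rr j * dd j) t - kk * t * St (fun j => dd j ^+ 2) t)
  - (dd 0 + dd 1) * (2 * St (fun j => rr j ^+ 2) t - kk * t * St (fun j => rr j * dd j) t).
Definition Kphi : R := 2 * piR R l r ^+ 2 * RV * rr 0 * rr 1
   / (((rV l r).-1`!)%:R * ((rV l r).+1`!)%:R).
Definition phi (t : R) := Kphi * (RV + (g%:R - 1) * t) * (detMt t)^-1.

Lemma rri_gt0 (i : 'I_l.-1) : 0 < rr i.+2.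
Proof. by apply: rr_gt0; have := ltn_ord i; lia. Qed.

Lemma sum_rri_ge0 : 0 <= \sum_(i < l.-1) rr i.+2.
Proof. by apply: sumr_ge0 => i _; apply: ltW; apply: rri_gt0. Qed.

Lemma RV_gt0 : 0 < RV.
Proof.
rewrite RV_split; have := rr_gt0 (leq0n l); have := rr_gt0 (ltnW hl); have := sum_rri_ge0; lra.
Qed.

Lemma RVn : (rV l r)%:R != 0 :> R.
Proof. exact: (lt0r_neq0 RV_gt0). Qed.
Lemma RV1n : (rV l r)%:R + 1 != 0 :> R.
Proof. have := RV_gt0; rewrite /RV => h; rewrite gt_eqF //; lra. Qed.
Lemma RV2n : (rV l r)%:R + 2 != 0 :> R.
Proof. have := RV_gt0; rewrite /RV => h; rewrite gt_eqF //; lra. Qed.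

Lemma Exp2_St W : Exp2 (St W) 0 (\sum_(i < l.-1) W i.+2 / ((RV + 2) * rr i.+2)).
Proof.
have E : forall i : 'I_l.-1, Exp2 (fun t => W i.+2 * (Et i.+2 t)^-1) (W i.+2 * ((RV + 2) * rr i.+2)^-1)
   (W i.+2 * (- (- 2 * dd i.+2) / ((RV + 2) * rr i.+2) ^+ 2) + 0 * ((RV + 2) * rr i.+2)^-1).
  move=> i; apply: Exp2_mul (Exp2_const _) (Exp2_inv _ _).
    apply: Exp2_ext (Exp2_lin _ _) => t; rewrite /Et; ring.
  have := rri_gt0 i; have := RV_gt0 => ? ?.
  by rewrite mulf_neq0 // gt_eqF //; lra.
apply: (Exp2_congr _ _ (Exp2_ext _ (Exp2_mul (Exp2_lin 0 1) (Exp2_sum E)))).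
- by ring.
- by ring.
- by move=> t; rewrite /St; ring.
Qed.

Definition SW (W : nat -> R) := \sum_(i < l.-1) W i.+2 / ((RV + 2) * rr i.+2).

Lemma Exp2_detM : Exp2 detMt ((rr 0 + rr 1) * RV)
  (2 * ((rr 0 + rr 1) * SW (fun j => rr j * dd j) - (dd 0 + dd 1) * SW (fun j => rr j ^+ 2))).
Proof.
have e1 := Exp2_mul (Exp2_const (rr 0 + rr 1)) (Exp2_add (Exp2_add (Exp2_const RV)
   (Exp2_mul (Exp2_const 2) (Exp2_St (fun j => rr j * dd j))))
   (Exp2_mul (Exp2_lin 0 (- kk)) (Exp2_St (fun j => dd j ^+ 2)))).
have e2 := Exp2_mul (Exp2_const (- (dd 0 + dd 1))) (Exp2_add
   (Exp2_mul (Exp2_const 2) (Exp2_St (fun j => rr j ^+ 2)))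
   (Exp2_mul (Exp2_lin 0 (- kk)) (Exp2_St (fun j => rr j * dd j)))).
apply: (Exp2_congr _ _ (Exp2_ext _ (Exp2_add e1 e2))).
- by rewrite /SW; ring.
- by rewrite /SW; ring.
- by move=> t; rewrite /detMt; ring.
Qed.

Lemma SW_rd : SW (fun j => rr j * dd j) = - (dd 0 + dd 1) / (RV + 2).
Proof.
rewrite /SW -dd_split mulr_suml; apply: eq_bigr => i _.
have := rri_gt0 i; have := RV_gt0 => ? ?; field; lra.
Qed.

Lemma SW_rr : SW (fun j => rr j ^+ 2) = (RV - rr 0 - rr 1) / (RV + 2).
Proof.
have -> : RV - rr 0 - rr 1 = \sum_(i < l.-1) rr i.+2 by rewrite RV_split; ring.
rewrite /SW mulr_suml; apply: eq_bigr => i _.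
have := rri_gt0 i; have := RV_gt0 => ? ?; field; lra.
Qed.

Lemma fact_neq0 k : (k`!)%:R != 0 :> R.
Proof. by rewrite pnatr_eq0 -lt0n fact_gt0. Qed.

Lemma Exp2_phi : Exp2 phi (Fut1 R l r) (Fut2 R l r d g).
Proof.
have r0 := rr_gt0 (leq0n l); have r1 := rr_gt0 (ltnW hl); have hR := RV_gt0.
have nz : (rr 0 + rr 1) * RV != 0 by rewrite mulf_neq0 // gt_eqF //; lra.
have e := Exp2_mul (Exp2_mul (Exp2_const Kphi) (Exp2_lin RV (g%:R - 1))) (Exp2_inv Exp2_detM nz).
have f1 := fact_neq0 (rV l r).-1; have f2 := fact_neq0 (rV l r).+1.
have h01 : (r 0)%:R + (r 1)%:R != 0 :> R by rewrite gt_eqF //; rewrite /rr in r0 r1; lra.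
have h2 : 2 + (rV l r)%:R != 0 :> R by rewrite gt_eqF //; rewrite /RV in hR; lra.
have h3 : (rV l r)%:R != 0 :> R by rewrite gt_eqF.
apply: (Exp2_congr _ _ (Exp2_ext _ e)).
- rewrite /Fut1 /Kphi natrD.
  by field; rewrite h01 f1 f2.
- rewrite SW_rd SW_rr /Fut2 /mu01 /Kphi natrD intrD.
  rewrite (factS (rV l r).+1) natrM.
  by field; rewrite h01 f1 f2 h2 h3.
- by move=> t; rewrite /phi.
Qed.

Lemma dV0 : dV R l d = 0.
Proof. by rewrite /dV -rmorph_sum /= hd. Qed.

Lemma piR_neq0 : piR R l r != 0.
Proof. by rewrite /piR pnatr_eq0 -lt0n prodn_gt0 // => i; rewrite fact_gt0. Qed.

Lemma rV_succ : exists m, rV l r = m.+1.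
Proof.
have := RV_gt0; rewrite /RV ltr0n; case: (rV l r) => // m _; by exists m.
Qed.

Definition kc (c : R) := (RV + 2) / ((RV + 1) * c).
Definition Dg j (c : R) := (RV + 2) * c * rr j - 2 * dd j.
Definition bq j (c : R) := - 2 * rr j + kc c * dd j.
Definition Qf j k (c : R) := rr j * Dg k c + dd j * bq k c.
Definition kap2 : R := piR R l r / ((rV l r).+2`!)%:R.

Lemma Aentry j k c : (j <= l)%N -> (k <= l)%N -> c != 0 ->
  alpha2 l r d j k c - alpha1 l r d j c * alpha1 l r d k c / alpha0 l r d c
  = kap2 * ((j == k)%:R * Dg j c - Qf j k c / RV).
Proof.
move=> jl kl c0.
have rj := rr_gt0 jl; have rk := rr_gt0 kl; have hR := RV_gt0.
have pn := piR_neq0.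
rewrite /alpha2 /alpha1 /alpha0 /kap2 /Qf /bq /Dg /kc /mu dV0 -/(rr j) -/(rr k) -/(dd j) -/(dd k).
have [m hm] := rV_succ.
move: hR; rewrite /RV hm => hR.
rewrite !factS !natrM -!natr1.
have fm := fact_neq0 m.
have m0 := ler0n R m.
have hm1 : m%:R + 1 != 0 :> R by rewrite gt_eqF //; lra.
have hm2 : m%:R + 1 + 1 != 0 :> R by rewrite gt_eqF //; lra.
have hm3 : m%:R + 1 + 1 + 1 != 0 :> R by rewrite gt_eqF //; lra.
have rjn : (r j)%:R != 0 :> R by rewrite gt_eqF.
have rkn : (r k)%:R != 0 :> R by rewrite gt_eqF.
rewrite /piR in pn.
by case: eqP => [<-|_] /=; rewrite ?mul1r ?mul0r; field; rewrite ?c0 ?fm ?hm1 ?hm2 ?hm3 ?pn ?rjn ?rkn.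
Qed.

Definition fBc (c : R) := piR R l r ^+ 2 * (2 * (1 - g%:R) - 2 * RV * c)
   / (((rV l r).-1`!)%:R * ((rV l r).+1`!)%:R).

Lemma Bentry j c : (j <= l)%N ->
  alpha0 l r d c * beta1 l r d g j c - alpha1 l r d j c * beta0 l r d g c = fBc c * dd j.
Proof.
move=> jl.
have rj := rr_gt0 jl; have pn := piR_neq0.
rewrite /beta0 /beta1 /alpha1 /alpha0 /fBc /RV /mu dV0 -/(rr j) -/(dd j).
have [m hm] := rV_succ.
rewrite hm /= !factS !natrM -!natr1.
have fm := fact_neq0 m.
have m0 := ler0n R m.
have hm1 : m%:R + 1 != 0 :> R by rewrite gt_eqF //; lra.
have hm2 : m%:R + 1 + 1 != 0 :> R by rewrite gt_eqF //; lra.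
have rjn : (r j)%:R != 0 :> R by rewrite gt_eqF.
rewrite /piR in pn.
by field; rewrite ?fm ?hm1 ?hm2 ?pn ?rjn.
Qed.

Section AtC.
Variable c : R.
Hypothesis c0 : 0 < c.
Hypothesis Dg0 : forall i : 'I_l.-1, Dg i.+2 c != 0.

Definition SWc (W : nat -> R) := \sum_(i < l.-1) W i.+2 / Dg i.+2 c.
Definition Srr := SWc (fun j => rr j ^+ 2).
Definition Srd := SWc (fun j => rr j * dd j).
Definition Sdd := SWc (fun j => dd j ^+ 2).
Definition sc : R := (RV + 2) * c.
Definition SC11 := sc * Srr - 2 * Srd.
Definition SC12 := -2 * Srr + kc c * Srd.
Definition SC21 := sc * Srd - 2 * Sdd.
Definition SC22 := -2 * Srd + kc c * Sdd.
Definition M11 := RV - SC11.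
Definition M12 := - SC12.
Definition M21 := - SC21.
Definition M22 := RV - SC22.
Definition detc := M11 * M22 - M12 * M21.
Definition h1 := - (SC11 * rr 1 + SC12 * dd 1).
Definition h2 := - (SC21 * rr 1 + SC22 * dd 1).
Definition z1 := (M22 * h1 - M12 * h2) / detc.
Definition z2 := (M11 * h2 - M21 * h1) / detc.
Definition w1 := sc * (z1 - rr 1) - 2 * (z2 - dd 1).
Definition w2 := -2 * (z1 - rr 1) + kc c * (z2 - dd 1).
Definition yv (i : 'I_l.-1) := (rr i.+2 * w1 + dd i.+2 * w2) / (RV * Dg i.+2 c).

Lemma SWc_lin (F : 'I_l.-1 -> R) (al be : R) (U V : nat -> R) :
  (forall i : 'I_l.-1, F i = al * (U i.+2 / Dg i.+2 c) + be * (V i.+2 / Dg i.+2 c)) ->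
  \sum_(i < l.-1) F i = al * SWc U + be * SWc V.
Proof.
by move=> H; rewrite /SWc !mulr_sumr -big_split; apply: eq_bigr => i _; rewrite H.
Qed.

Lemma Z1E : \sum_(i < l.-1) rr i.+2 * yv i = (w1 * Srr + w2 * Srd) / RV.
Proof.
have hR := RV_gt0.
rewrite mulrDl !(mulrC _ (RV^-1)) !mulrA; apply: SWc_lin => i.
rewrite /yv; have := Dg0 i => h; field; by rewrite h /= (lt0r_neq0 hR).
Qed.

Lemma Z2E : \sum_(i < l.-1) dd i.+2 * yv i = (w1 * Srd + w2 * Sdd) / RV.
Proof.
have hR := RV_gt0.
rewrite mulrDl !(mulrC _ (RV^-1)) !mulrA; apply: SWc_lin => i.
rewrite /yv; have := Dg0 i => h; field; by rewrite h /= (lt0r_neq0 hR).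
Qed.

Hypothesis det0 : detc != 0.

Lemma z1E : (w1 * Srr + w2 * Srd) / RV = z1.
Proof.
have hR := RV_gt0.
move: det0; rewrite /w1 /w2 /z1 /z2 /detc /h1 /h2 /M11 /M12 /M21 /M22 /SC11 /SC12 /SC21 /SC22 => dn.
field; rewrite dn gt_eqF //.
Qed.

Lemma z2E : (w1 * Srd + w2 * Sdd) / RV = z2.
Proof.
have hR := RV_gt0.
move: det0; rewrite /w1 /w2 /z1 /z2 /detc /h1 /h2 /M11 /M12 /M21 /M22 /SC11 /SC12 /SC21 /SC22 => dn.
field; rewrite dn gt_eqF //.
Qed.

Lemma sum3 n (F G H : 'I_n -> R) (a b e : R) :
  \sum_(k < n) (a * F k + b * G k + e * H k) = a * \sum_k F k + b * \sum_k G k + e * \sum_k H k.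
Proof. by rewrite !big_split /= !mulr_sumr. Qed.

Lemma sum_delta n (i : 'I_n) (Y : 'I_n -> R) : \sum_(k < n) (i == k)%:R * Y k = Y i.
Proof.
rewrite (bigD1 i) //= eqxx mul1r big1 ?addr0 // => k ki.
by rewrite eq_sym (negbTE ki) mul0r.
Qed.

Lemma QfE j k : Qf j k c = Dg j c * rr k + bq j c * dd k.
Proof. by rewrite /Qf /Dg /bq; ring. Qed.

Lemma Ay : Amat l r d c *m (\col_i yv i) =
  \col_(j < l.-1) (alpha2 l r d j.+2 1 c - alpha1 l r d 1 c * alpha1 l r d j.+2 c / alpha0 l r d c).
Proof.
have cn : c != 0 by rewrite gt_eqF.
have hR := RV_gt0.
apply/matrixP => i j0; rewrite !mxE.
have il : (i.+2 <= l)%N by have := ltn_ord i; lia.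
have -> : \sum_(k < l.-1) Amat l r d c i k * (\col_i0 yv i0) k j0 =
  \sum_(k < l.-1) (kap2 * Dg i.+2 c * ((i == k)%:R * yv k) + (- kap2 * Dg i.+2 c / RV) * (rr k.+2 * yv k)
        + (- kap2 * bq i.+2 c / RV) * (dd k.+2 * yv k)).
  apply: eq_bigr => k _; rewrite !mxE Aentry //; last by have := ltn_ord k; lia.
  by rewrite QfE /=; field; rewrite (lt0r_neq0 hR).
rewrite sum3 sum_delta Z1E Z2E z1E z2E.
rewrite (mulrC (alpha1 l r d 1 c)) Aentry //; last by lia.
have e0 : (i.+2 == 1)%N = false by [].
rewrite e0 mul0r sub0r QfE.
rewrite /yv /w1 /w2; have := Dg0 i => h.
rewrite /Dg /bq /kc /sc in h *.
move: h; rewrite /RV /rr /dd => h.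
by field; rewrite h cn RVn RV1n.
Qed.

Lemma kap2_neq0 : kap2 != 0.
Proof. by rewrite /kap2 mulf_neq0 ?invr_eq0 ?fact_neq0 ?piR_neq0. Qed.

Lemma Aunit : Amat l r d c \in unitmx.
Proof.
have cn : c != 0 by rewrite gt_eqF.
have hR := RV_gt0; have k2 := kap2_neq0.
rewrite unitmxE unitfE; apply/det0P => [[v vn vA]].
set p := \sum_(i < l.-1) v 0 i * rr i.+2.
set q := \sum_(i < l.-1) v 0 i * dd i.+2.
have vk : forall k : 'I_l.-1, v 0 k = (Dg k.+2 c * p + bq k.+2 c * q) / (RV * Dg k.+2 c).
  move=> k; move/matrixP: (vA) => /(_ 0 k); rewrite !mxE.
  have kl : (k.+2 <= l)%N by have := ltn_ord k; lia.
  have -> : \sum_(i < l.-1) v 0 i * Amat l r d c i k =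
    \sum_(i < l.-1) (kap2 * Dg k.+2 c * ((k == i)%:R * v 0 i) + (- kap2 * Dg k.+2 c / RV) * (v 0 i * rr i.+2)
        + (- kap2 * bq k.+2 c / RV) * (v 0 i * dd i.+2)).
    apply: eq_bigr => i _; rewrite !mxE Aentry //; last by have := ltn_ord i; lia.
    rewrite /Qf /=; case: (eqVneq k i) => [->|ne]; first by rewrite eqxx; field; rewrite (lt0r_neq0 hR).
    have ne' : (i.+2 == k.+2)%N = false.
      by apply/negbTE; apply: contra ne => /eqP [/val_inj ->].
    by rewrite ne' /= mulr0n !mul0r; field; rewrite (lt0r_neq0 hR).
  rewrite sum3 sum_delta -/p -/q => e.
  have := Dg0 k => h.
  apply/eqP; rewrite -subr_eq0; apply/eqP.
  have : kap2 * Dg k.+2 c * (v 0 k - (Dg k.+2 c * p + bq k.+2 c * q) / (RV * Dg k.+2 c)) = 0.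
    rewrite -e; field; by rewrite h (lt0r_neq0 hR).
  have kd : kap2 * Dg k.+2 c != 0 by rewrite mulf_neq0.
  by move/eqP; rewrite mulf_eq0 (negbTE kd) /= => /eqP.
have E1 : p = (p * sc - 2 * q) / RV * Srr + (-2 * p + kc c * q) / RV * Srd.
  rewrite {1}/p; apply: SWc_lin => i; rewrite vk.
  have := Dg0 i => h; rewrite /Dg /bq /sc in h *.
  by field; rewrite h (lt0r_neq0 hR).
have E2 : q = (p * sc - 2 * q) / RV * Srd + (-2 * p + kc c * q) / RV * Sdd.
  rewrite {1}/q; apply: SWc_lin => i; rewrite vk.
  have := Dg0 i => h; rewrite /Dg /bq /sc in h *.
  by field; rewrite h (lt0r_neq0 hR).
have L1 : M11 * p + M12 * q = RV * (p - ((p * sc - 2 * q) / RV * Srr + (-2 * p + kc c * q) / RV * Srd)).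
  by rewrite /M11 /M12 /SC11 /SC12; field; rewrite (lt0r_neq0 hR).
have L2 : M21 * p + M22 * q = RV * (q - ((p * sc - 2 * q) / RV * Srd + (-2 * p + kc c * q) / RV * Sdd)).
  by rewrite /M21 /M22 /SC21 /SC22; field; rewrite (lt0r_neq0 hR).
rewrite -E1 subrr mulr0 in L1; rewrite -E2 subrr mulr0 in L2.
have hp : detc * p = 0.
  have -> : detc * p = M22 * (M11 * p + M12 * q) - M12 * (M21 * p + M22 * q) by rewrite /detc; ring.
  by rewrite L1 L2 !mulr0 subr0.
have hq : detc * q = 0.
  have -> : detc * q = M11 * (M21 * p + M22 * q) - M21 * (M11 * p + M12 * q) by rewrite /detc; ring.
  by rewrite L1 L2 !mulr0 subr0.
move/eqP: hp; rewrite mulf_eq0 (negbTE det0) /= => /eqP p0.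
move/eqP: hq; rewrite mulf_eq0 (negbTE det0) /= => /eqP q0.
move/eqP: vn; apply; apply/matrixP => i k; rewrite (ord1 i) vk p0 q0 !mxE; by rewrite !mulr0 addr0 mul0r.
Qed.

Lemma Fring_eq : Fring l r d g c = fBc c * (dd 1 - z2).
Proof.
rewrite /Fring Bentry; last exact: ltnW.
set A := Amat l r d c.
set at_ := \col_(j < l.-1) (alpha2 l r d j.+2 1 c - alpha1 l r d 1 c * alpha1 l r d j.+2 c / alpha0 l r d c).
have iy : invmx A *m at_ = \col_i yv i by rewrite /at_ -Ay mulKmx //; exact: Aunit.
have -> : \sum_(j < l.-1) \sum_(s < l.-1) invmx A s j *
      (alpha0 l r d c * beta1 l r d g s.+2 c - alpha1 l r d s.+2 c * beta0 l r d g c) *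
      (alpha2 l r d j.+2 1 c - alpha1 l r d 1 c * alpha1 l r d j.+2 c / alpha0 l r d c)
   = \sum_(s < l.-1) fBc c * (dd s.+2 * yv s).
  rewrite exchange_big; apply: eq_bigr => s _.
  have -> : yv s = (invmx A *m at_) s 0 by rewrite iy mxE.
  rewrite mxE Bentry; last by have := ltn_ord s; lia.
  rewrite !mulr_sumr; apply: eq_bigr => j _; rewrite /at_ mxE; ring.
by rewrite -mulr_sumr Z2E z2E; ring.
Qed.

Lemma SC11E : SC11 = RV - rr 0 - rr 1.
Proof.
have -> : RV - rr 0 - rr 1 = \sum_(i < l.-1) rr i.+2 by rewrite RV_split; ring.
rewrite /SC11 /Srr /Srd -mulNr; symmetry; apply: SWc_lin => i.
have := Dg0 i; rewrite /Dg /sc => h; by field.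
Qed.

Lemma SC21E : SC21 = - (dd 0 + dd 1).
Proof.
rewrite -dd_split /SC21 /Srd /Sdd -mulNr; symmetry; apply: SWc_lin => i.
have := Dg0 i; rewrite /Dg /sc => h; by field.
Qed.

Lemma SWc_St W : SWc W = St W c^-1.
Proof.
have cn : c != 0 by rewrite gt_eqF.
rewrite /SWc /St mulr_sumr; apply: eq_bigr => i _.
have := Dg0 i; rewrite /Dg /Et => h.
move: h; rewrite mulrAC /RV /rr /dd => h.
by field; rewrite cn h.
Qed.

Lemma detcE : detc = detMt c^-1.
Proof.
have cn : c != 0 by rewrite gt_eqF.
rewrite /detc /M11 /M12 /M21 /M22 SC11E SC21E /SC12 /SC22 /Srr /Srd /Sdd !SWc_St /detMt /kc /kk.
field; rewrite cn RV1n //.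
Qed.

Lemma z2_eq : dd 1 - z2 = RV * (rr 0 * dd 1 - rr 1 * dd 0) / detc.
Proof.
move: det0; rewrite /z2 /detc /h1 /h2 /M11 /M12 /M21 /M22 SC11E SC21E => dn.
by field.
Qed.

Lemma Fring_phi : Fring l r d g c = (mu R r d 0 - mu R r d 1) * c * phi c^-1.
Proof.
have cn : c != 0 by rewrite gt_eqF.
have r0 := rr_gt0 (leq0n l); have r1 := rr_gt0 (ltnW hl).
rewrite Fring_eq z2_eq /phi -detcE /fBc /Kphi /mu -/(rr 0) -/(rr 1) -/(dd 0) -/(dd 1).
move: det0 => dn.
have f1 := fact_neq0 (rV l r).-1; have f2 := fact_neq0 (rV l r).+1.
by field; rewrite dn cn f1 f2 (lt0r_neq0 r0) (lt0r_neq0 r1).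
Qed.

End AtC.

Lemma piR_gt0 : 0 < piR R l r.
Proof. by rewrite /piR ltr0n prodn_gt0 // => i; rewrite fact_gt0. Qed.

Lemma Fut1_gt0 : 0 < Fut1 R l r.
Proof.
have r0 := rr_gt0 (leq0n l); have r1 := rr_gt0 (ltnW hl); have hR := RV_gt0.
have p := piR_gt0.
rewrite /Fut1 natrD -/(rr 0) -/(rr 1) -/RV.
have f1 : 0 < ((rV l r).-1`!)%:R :> R by rewrite ltr0n fact_gt0.
have f2 : 0 < ((rV l r).+1`!)%:R :> R by rewrite ltr0n fact_gt0.
apply: divr_gt0; first by rewrite !mulr_gt0 ?exprn_gt0.
by rewrite !mulr_gt0 //; lra.
Qed.

Definition Bd : R := \sum_(i < l.-1) `|dd i.+2|.

Lemma dd_le_Bd (i : 'I_l.-1) : `|dd i.+2| <= Bd.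
Proof.
rewrite /Bd (bigD1 i) //= lerDl; apply: sumr_ge0 => j _; exact: normr_ge0.
Qed.

Lemma Dg_pos c (i : 'I_l.-1) : 2 * Bd + 1 < c -> 0 < Dg i.+2 c.
Proof.
move=> hc.
have h1 := dd_le_Bd i; have h2 := ler_norm (dd i.+2).
have ri : 1 <= rr i.+2 by rewrite /rr ler1n; apply: hr; have := ltn_ord i; lia.
have hR := RV_gt0.
have hB : 0 <= Bd by apply: sumr_ge0 => j _; exact: normr_ge0.
rewrite /Dg.
have : c <= (RV + 2) * c * rr i.+2.
  have e : 1 <= (RV + 2) * rr i.+2 by nra.
  rewrite -mulrA [c * _]mulrC mulrA; rewrite -[X in X <= _]mul1r.
  by apply: ler_wpM2r => //; lra.
lra.
Qed.

Lemma main_spec : 0 < Fut1 R l r /\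
  exists Fut : nat -> R,
    Fut 1%N = Fut1 R l r /\ Fut 2%N = Fut2 R l r d g /\
    forall N : nat, exists M K : R, forall c : R, M < c ->
      `| Fring l r d g c
         - (mu R r d 0 - mu R r d 1)
           * \sum_(i < N) Fut i.+1 * c ^ (1 - (i : nat)%:Z) |
      <= K * c ^ (1 - N%:Z).
Proof.
split; first exact: Fut1_gt0.
have [a [Ea a0 a1]] := Exp2_phi.
have r0 := rr_gt0 (leq0n l); have r1 := rr_gt0 (ltnW hl); have hR := RV_gt0.
have nz : (rr 0 + rr 1) * RV != 0 by rewrite mulf_neq0 // gt_eqF //; lra.
have [d1 d10 Hd1] := Exp2_nz Exp2_detM nz.
exists (fun i => a i.-1); split => //; split => // N.
have [d2 d20 [K HK]] := Ea N.
have hB : 0 <= Bd by apply: sumr_ge0 => j _; exact: normr_ge0.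
exists (2 * Bd + 1 + d1^-1 + d2^-1), (`|mu R r d 0 - mu R r d 1| * K) => c hc.
have i1 : 0 < d1^-1 by rewrite invr_gt0.
have i2 : 0 < d2^-1 by rewrite invr_gt0.
have c0 : 0 < c by lra.
have cn : c != 0 by rewrite gt_eqF.
have t0 : 0 < c^-1 by rewrite invr_gt0.
have t1 : c^-1 < d1 by rewrite -[d1]invrK ltf_pV2 ?posrE //; lra.
have t2 : c^-1 < d2 by rewrite -[d2]invrK ltf_pV2 ?posrE //; lra.
have Dg0 : forall i : 'I_l.-1, Dg i.+2 c != 0.
  by move=> i; rewrite gt_eqF // Dg_pos //; lra.
have det0 : detc c != 0 by rewrite (detcE c0 Dg0); apply: Hd1.
rewrite (Fring_phi c0 Dg0 det0).
have -> : \sum_(i < N) a i.+1.-1 * c ^ (1 - (i : nat)%:Z) = c * psum a N c^-1.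
  rewrite /psum horner_poly mulr_sumr; apply: eq_bigr => i _ /=.
  by rewrite exprz1B //; ring.
rewrite exprz1B //.
have -> : (mu R r d 0 - mu R r d 1) * c * phi c^-1 - (mu R r d 0 - mu R r d 1) * (c * psum a N c^-1)
  = (mu R r d 0 - mu R r d 1) * c * (phi c^-1 - psum a N c^-1) by ring.
rewrite normrM normrM (gtr0_norm c0) -!mulrA.
apply: ler_wpM2l; first exact: normr_ge0.
rewrite mulrCA; apply: ler_wpM2l; first exact: ltW.
exact: HK.
Qed.

End Spec.

Unset Implicit Arguments.
Set Strict Implicit.

Theorem proposition3p18 (R : realType) (l : nat) (r : nat -> nat)
    (d : nat -> int) (g : nat) :
  (2 <= l)%N ->
  (forall k, (k <= l)%N -> (0 < r k)%N) ->
  (\sum_(k < l.+1) d k = 0)%R ->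
  (1 <= g)%N ->
  0 < Fut1 R l r /\
  exists Fut : nat -> R,
    Fut 1%N = Fut1 R l r /\ Fut 2%N = Fut2 R l r d g /\
    forall N : nat, exists M K : R, forall c : R, M < c ->
      `| Fring l r d g c
         - (mu R r d 0 - mu R r d 1)
           * \sum_(i < N) Fut i.+1 * c ^ (1 - (i : nat)%:Z) |
      <= K * c ^ (1 - N%:Z).
Proof.
move=> hl hr hd _.
exact: (@main_spec R l r d g hl hr hd).
Qed.
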